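(* Let $\mathcal{H}$ be a complex Hilbert space and $B,C\in\mathcal{B}(\mathcal{H})$. Then for every $0\le\alpha\le1$, $$\begin{aligned}w^4\left(\begin{bmatrix}0 & B\\ C & 0\end{bmatrix}\right)\le{}& \frac{1+\alpha}{8}\max\left\{\big\||B|^4+|C^*|^4\big\|,\ \big\||B^*|^4+|C|^4\big\|\right\}+\frac{1-\alpha}{4}\max\{w^2(BC),w^2(CB)\}\\&+\frac14\max\left\{\big\||B|^2+|C^*|^2\big\|,\ \big\||B^*|^2+|C|^2\big\|\right\}\cdot\max\{w(BC),w(CB)\}.\end{aligned}$$
   Context: $\mathcal{B}(\mathcal{H})$ is the algebra of bounded linear operators on $\mathcal{H}$ with operator norm $\|\cdot\|$. For $A\in\mathcal{B}(\mathcal{H})$, $A^*$ is the adjoint, $|A|=(A^*A)^{1/2}$, $|A^*|=(AA^* )^{1/2}$, and $w(A)=\sup_{\|x\|=1}|\langle Ax,x\rangle|$ is the numerical radius. The operator matrix $\begin{bmatrix}A&B\\C&D\end{bmatrix}$ acts on $\mathcal{H}\oplus\mathcal{H}$ by $(x_1,x_2)\mapsto(Ax_1+Bx_2,\,Cx_1+Dx_2)$; $0$ denotes the zero operator. *)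

(* Defs.v *)
From HB Require Import structures.
From mathcomp Require Import all_boot all_order all_algebra.
From mathcomp Require Import complex.
From mathcomp Require Import boolp classical_sets reals.
Set Implicit Arguments. Unset Strict Implicit. Unset Printing Implicit Defensive.
Import Order.TTheory GRing.Theory Num.Theory.
Local Open Scope ring_scope.
Local Open Scope classical_set_scope.

Section Hilbert.
Variable R : realType.
Local Notation C := R[i].

Definition cabs (z : C) : R := Num.sqrt (complex.Re z ^+ 2 + complex.Im z ^+ 2).

Record hilbert := Hilbert {
  hspace : lmodType C;
  hip : hspace -> hspace -> C;
  hip_linear : forall (a : C) (x y z : hspace),
      hip (a *: x + y) z = a * hip x z + hip y z;
  hip_conj : forall x y : hspace, hip x y = (hip y x)^*%C;
  hip_ge0 : forall x : hspace, 0 <= hip x x;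
  hip_eq0 : forall x : hspace, hip x x = 0 -> x = 0;
  hip_complete : forall u : nat -> hspace,
      (forall e : R, 0 < e -> exists N : nat, forall m n : nat, (N <= m)%N -> (N <= n)%N ->
          Num.sqrt (complex.Re (hip (u m - u n) (u m - u n))) < e) ->
      exists l : hspace, forall e : R, 0 < e -> exists N : nat, forall n : nat, (N <= n)%N ->
          Num.sqrt (complex.Re (hip (u n - l) (u n - l))) < e
}.

Variable H : hilbert.
Local Notation V := (hspace H).
Local Notation ip := (@hip H).

Definition hnorm (x : V) : R := Num.sqrt (complex.Re (ip x x)).

Definition bounded_op (T : V -> V) : Prop :=
  (forall (a : C) (x y : V), T (a *: x + y) = a *: T x + T y) /\
  exists M : R, forall x : V, hnorm (T x) <= M * hnorm x.

Definition is_adjoint (T Ts : V -> V) : Prop :=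
  forall x y : V, ip (T x) y = ip x (Ts y).

Definition opnorm (T : V -> V) : R :=
  sup [set hnorm (T x) | x in [set x : V | hnorm x = 1]].

Definition numrad (T : V -> V) : R :=
  sup [set cabs (ip (T x) x) | x in [set x : V | hnorm x = 1]].

Definition ip2 (x y : V * V) : C := ip x.1 y.1 + ip x.2 y.2.
Definition hnorm2 (x : V * V) : R := Num.sqrt (complex.Re (ip2 x x)).

(* the operator matrix [[A, B], [C, D]] acting on H (+) H *)
Definition opmx (A B C' D : V -> V) (x : V * V) : V * V :=
  (A x.1 + B x.2, C' x.1 + D x.2).

Definition numrad2 (T : V * V -> V * V) : R :=
  sup [set cabs (ip2 (T x) x) | x in [set x : V * V | hnorm2 x = 1]].

Definition opadd (S T : V -> V) : V -> V := fun x => S x + T x.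
Definition opzero : V -> V := fun _ => 0.

End Hilbert.

(* Main.v *)
Require Import Defs.
From HB Require Import structures.
From mathcomp Require Import all_boot all_order all_algebra.
From mathcomp Require Import complex.
From mathcomp Require Import boolp classical_sets reals.
From mathcomp Require Import ring lra.
Import Order.TTheory GRing.Theory Num.Theory.
Set Implicit Arguments. Unset Strict Implicit. Unset Printing Implicit Defensive.
Local Open Scope ring_scope.

Section Cabs.
Variable R : realType.
Implicit Types z w : R[i].

Lemma cabsE z : `|z| = (cabs z)%:C%C.
Proof. by rewrite normc_def. Qed.

Lemma cabs_ge0 z : 0 <= cabs z.
Proof. exact: sqrtr_ge0. Qed.

Lemma cabsM z w : cabs (z * w) = cabs z * cabs w.
Proof. by apply: complexI; rewrite rmorphM /= -!cabsE normrM. Qed.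

Lemma cabsD z w : cabs (z + w) <= cabs z + cabs w.
Proof. by rewrite -lecR rmorphD /= -!cabsE ler_normD. Qed.

Lemma cabsJ z : cabs z^*%C = cabs z.
Proof. by case: z => a b; rewrite /cabs /= sqrrN. Qed.

Lemma cabsN z : cabs (- z) = cabs z.
Proof. by case: z => a b; rewrite /cabs /= !sqrrN. Qed.

Lemma cabs_real (r : R) : 0 <= r -> cabs r%:C%C = r.
Proof. by move=> r0; rewrite /cabs /= expr0n /= addr0 sqrtr_sqr ger0_norm. Qed.

Lemma Re_le_cabs z : complex.Re z <= cabs z.
Proof.
case: z => a b; rewrite /cabs /=.
apply: (le_trans (ler_norm a)); rewrite -sqrtr_sqr.
by apply: ler_wsqrtr; rewrite lerDl sqr_ge0.
Qed.

Lemma ReJ z : complex.Re z^*%C = complex.Re z.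
Proof. by case: z. Qed.

End Cabs.

Section GenIP.
Variable R : realType.
Local Notation C := R[i].
Local Notation Re := complex.Re.
Variable V : lmodType C.
Variable ip : V -> V -> C.
Hypothesis lin : forall (a : C) (x y z : V), ip (a *: x + y) z = a * ip x z + ip y z.
Hypothesis cj : forall x y : V, ip x y = (ip y x)^*%C.
Hypothesis ge0 : forall x : V, 0 <= ip x x.
Set Default Proof Using "All".

Lemma ipDl x y z : ip (x + y) z = ip x z + ip y z.
Proof. by have := lin 1 x y z; rewrite scale1r mul1r. Qed.

Lemma ip0l z : ip 0 z = 0.
Proof. by apply: (addrI (ip 0 z)); rewrite -ipDl !addr0. Qed.

Lemma ipZl a x z : ip (a *: x) z = a * ip x z.
Proof. by have := lin a x 0 z; rewrite !addr0 ip0l addr0. Qed.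

Lemma ipNl x z : ip (- x) z = - ip x z.
Proof. by rewrite -scaleN1r ipZl mulN1r. Qed.

Lemma ipBl x y z : ip (x - y) z = ip x z - ip y z.
Proof. by rewrite ipDl ipNl. Qed.

Lemma ipDr x y z : ip x (y + z) = ip x y + ip x z.
Proof. by rewrite cj ipDl rmorphD /= -!cj. Qed.

Lemma ipZr a x y : ip x (a *: y) = a^*%C * ip x y.
Proof. by rewrite cj ipZl rmorphM /= -cj. Qed.

Lemma ipNr x y : ip x (- y) = - ip x y.
Proof. by rewrite cj ipNl rmorphN /= -cj. Qed.

Lemma ipBr x y z : ip x (y - z) = ip x y - ip x z.
Proof. by rewrite ipDr ipNr. Qed.

Lemma ip_real x : ip x x = (Re (ip x x))%:C%C.
Proof.
move: (ge0 x); case: (ip x x) => a b; rewrite lecE /= => /andP [/eqP -> _].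
by [].
Qed.

Lemma Re_ge0 x : 0 <= Re (ip x x).
Proof. by move: (ge0 x); rewrite lecE => /andP [_ ->]. Qed.

Definition nrm x := Num.sqrt (Re (ip x x)).

Lemma nrm_ge0 x : 0 <= nrm x.
Proof. exact: sqrtr_ge0. Qed.

Lemma nrm_sq x : nrm x ^+ 2 = Re (ip x x).
Proof. by rewrite sqr_sqrtr // Re_ge0. Qed.

Lemma CS2 x y : cabs (ip x y) ^+ 2 <= Re (ip x x) * Re (ip y y).
Proof.
set A := Re (ip x x); set Bv := Re (ip y y).
have key : forall t : R, 0 <= A - 2 * t * cabs (ip x y) ^+2 + t^+2 * cabs (ip x y) ^+2 * Bv.
  move=> t; have := Re_ge0 (x - (t%:C%C * ip x y) *: y).
  rewrite ipBl !ipBr !ipZl !ipZr (cj y x) (ip_real x) (ip_real y) -/A -/Bv.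
  rewrite /cabs; move: (ip x y) => [pa pb] /=.
  rewrite sqr_sqrtr; last by rewrite addr_ge0 ?sqr_ge0.
  move=> h; apply: le_trans h _; rewrite le_eqVlt; apply/orP; left; apply/eqP.
  by rewrite /=; ring.
have A0 : 0 <= A by apply: Re_ge0.
have B0 : 0 <= Bv by apply: Re_ge0.
set q := cabs (ip x y) ^+ 2 in key *.
have q0 : 0 <= q by rewrite sqr_ge0.
have [qe|qp] := eqVneq q 0; first by rewrite qe mulr_ge0.
have {}qp : 0 < q by rewrite lt_def qp q0.
have [Be|Bp] := eqVneq Bv 0.
  have := key ((A + 1) / (2 * q)); rewrite Be mulr0 addr0.
  have -> : 2 * ((A + 1) / (2 * q)) * q = A + 1.
    by field; rewrite gt_eqF.
  lra.
have {}Bp : 0 < Bv by rewrite lt_def Bp B0.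
have := key (Bv^-1).
have -> : Bv^-1 ^+ 2 * q * Bv = q / Bv by field; rewrite gt_eqF.
have -> : A - 2 * Bv^-1 * q + q / Bv = (A * Bv - q) / Bv by field; rewrite gt_eqF.
by rewrite pmulr_lge0 ?invr_gt0 // subr_ge0.
Qed.

Lemma CS x y : cabs (ip x y) <= nrm x * nrm y.
Proof.
have := CS2 x y; rewrite -!nrm_sq -exprMn => h.
by rewrite -(@ler_pXn2r _ 2) // ?nnegrE ?mulr_ge0 ?nrm_ge0 ?cabs_ge0.
Qed.

Lemma ReCS x y : Re (ip x y) <= nrm x * nrm y.
Proof. exact: le_trans (Re_le_cabs _) (CS x y). Qed.

Lemma nrmZ (r : R) x : 0 <= r -> nrm (r%:C%C *: x) = r * nrm x.
Proof.
move=> r0; rewrite /nrm ipZl ipZr conjc_real (ip_real x).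
rewrite -!rmorphM /= mulrA -expr2 sqrtrM ?sqr_ge0 // sqrtr_sqr ger0_norm //.
Qed.

Lemma nrmD x y : nrm (x + y) <= nrm x + nrm y.
Proof.
have h : nrm (x + y) ^+ 2 <= (nrm x + nrm y) ^+ 2.
  rewrite nrm_sq ipDl !ipDr !raddfD /= -!nrm_sq.
  have := ReCS x y; have := ReCS y x; have := nrm_ge0 x; have := nrm_ge0 y.
  move=> *; nra.
by rewrite -(@ler_pXn2r _ 2) // ?nnegrE ?addr_ge0 ?nrm_ge0.
Qed.

Lemma buzano a b e : ip e e = 1 ->
  2 * cabs (ip a e * ip e b) <= nrm a * nrm b + cabs (ip a b).
Proof.
move=> e1; set c := ip a e.
set u := (c + c) *: e - a.
have hu : ip u u = ip a a.
  rewrite /u ipBl !ipBr !ipZl !ipZr e1 (cj e a) -/c rmorphD /=.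
  ring.
have hub : ip u b = 2 * (c * ip e b) - ip a b.
  rewrite /u ipBl ipZl; congr (_ - _); ring.
have nu : nrm u = nrm a by rewrite /nrm hu.
have := CS u b; rewrite nu hub => h.
have := cabsD (2 * (c * ip e b) - ip a b) (ip a b); rewrite subrK cabsM.
have c2 : (2 : R[i]) = (2 : R)%:C%C by rewrite rmorph_nat.
move: h; rewrite c2 cabs_real // => h1 h2; lra.
Qed.

End GenIP.

Section SupLemmas.
Variable R : realType.
Local Open Scope classical_set_scope.

Lemma sup_ge0' (E : set R) : (forall v, E v -> 0 <= v) -> 0 <= sup E.
Proof.
move=> h; have [hs|hs] := pselect (has_sup E); last by rewrite sup_out.
case: (hs) => [[v Ev] hu].
exact: le_trans (h v Ev) (ub_le_sup hu Ev).
Qed.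

Lemma le_sup' (E : set R) (M v : R) : (forall y, E y -> y <= M) -> E v -> v <= sup E.
Proof. by move=> hM Ev; apply: (ub_le_sup _ Ev); exists M. Qed.

Lemma sup4_le (E : set R) (K : R) : 0 <= K ->
  (forall v, E v -> 0 <= v /\ v ^+ 4 <= K) -> sup E ^+ 4 <= K.
Proof.
move=> K0 h.
set r := Num.sqrt (Num.sqrt K).
have r0 : 0 <= r by apply: sqrtr_ge0.
have r4 : r ^+ 4 = K.
  by rewrite (_ : 4 = 2 * 2)%N // exprM sqr_sqrtr ?sqrtr_ge0 // sqr_sqrtr.
have hv : forall v, E v -> v <= r.
  move=> v Ev; have [v0 v4] := h v Ev.
  by rewrite -(@ler_pXn2r _ 4) // ?nnegrE // r4.
have s0 : 0 <= sup E by apply: sup_ge0' => v /h [].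
have sr : sup E <= r.
  have [->|ne] := eqVneq E set0; first by rewrite sup0.
  apply: ge_sup; last by move=> v /hv.
  by apply/set0P.
by rewrite -r4 lerXn2r ?nnegrE.
Qed.

End SupLemmas.

Section Ops.
Variable R : realType.
Variable H : hilbert R.
Local Notation V := (hspace H).
Local Notation ip := (@hip _ H).
Local Notation Re := complex.Re.
Local Notation hlin := (@hip_linear _ H).
Local Notation hcj := (@hip_conj _ H).
Local Notation hge := (@hip_ge0 _ H).
Local Open Scope classical_set_scope.

Definition islin (f : V -> V) := forall (a : R[i]) (x y : V), f (a *: x + y) = a *: f x + f y.
Definition bnd (f : V -> V) (M : R) := 0 <= M /\ forall x, hnorm (f x) <= M * hnorm x.

Lemma hnormE (x : V) : hnorm x = nrm ip x. Proof. by []. Qed.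

Lemma lin0 f : islin f -> f 0 = 0.
Proof.
move=> hf; have h := hf 1 0 0; rewrite !scale1r addr0 in h.
by apply: (addrI (f 0)); rewrite addr0 -h.
Qed.

Lemma linZ f a x : islin f -> f (a *: x) = a *: f x.
Proof. by move=> hf; have := hf a x 0; rewrite !addr0 lin0 // addr0. Qed.

Lemma linD f x y : islin f -> f (x + y) = f x + f y.
Proof. by move=> hf; have := hf 1 x y; rewrite !scale1r. Qed.

Lemma hnorm_eq0 (x : V) : hnorm x = 0 -> x = 0.
Proof.
move=> h; apply: (@hip_eq0 _ H).
have h2 : Re (ip x x) = 0.
  by rewrite -(nrm_sq hlin hcj hge) /nrm -/(hnorm x) h expr0n.
by rewrite (ip_real hlin hcj hge) h2.
Qed.

Lemma hnorm0 : hnorm (0 : V) = 0.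
Proof. by rewrite /hnorm (ip0l hlin hcj hge) /= sqrtr0. Qed.

Lemma adjl (T Ts : V -> V) : is_adjoint T Ts -> forall y z, ip (Ts y) z = ip y (T z).
Proof. by move=> hT y z; rewrite hcj -hT -hcj. Qed.

Lemma adj_lin (T Ts : V -> V) : is_adjoint T Ts -> islin Ts.
Proof.
move=> hT a x y; apply/eqP; rewrite -subr_eq0; apply/eqP.
set d := _ - _.
have hz : forall z, ip z d = 0.
  move=> z; rewrite /d (ipBr hlin hcj hge) (ipDr hlin hcj hge) (ipZr hlin hcj hge) -!hT.
  rewrite (ipDr hlin hcj hge) (ipZr hlin hcj hge); ring.
exact: (@hip_eq0 _ H) (hz d).
Qed.

Lemma adj_bnd (T Ts : V -> V) M : is_adjoint T Ts -> bnd T M -> bnd Ts M.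
Proof.
move=> hT [M0 hM]; split => // y.
have h1 : hnorm (Ts y) ^+ 2 <= M * hnorm (Ts y) * hnorm y.
  rewrite (nrm_sq hlin hcj hge) -hT.
  apply: le_trans (ReCS hlin hcj hge _ _) _.
  by rewrite ler_wpM2r ?(nrm_ge0 hlin hcj hge) ?hM.
have := nrm_ge0 hlin hcj hge (Ts y); have := nrm_ge0 hlin hcj hge y.
rewrite /nrm -/(hnorm _) -/(hnorm _) => n1 n2.
have [e0|nz] := eqVneq (hnorm (Ts y)) 0; first by rewrite e0 mulr_ge0.
have np : 0 < hnorm (Ts y) by rewrite lt_def nz n2.
rewrite -(ler_pM2r np); nra.
Qed.

Lemma bnd_comp f g M N : bnd f M -> bnd g N -> bnd (f \o g) (M * N).
Proof.
move=> [M0 hM] [N0 hN]; split; first by rewrite mulr_ge0.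
move=> x /=; apply: le_trans (hM _) _; rewrite -mulrA ler_wpM2l //.
Qed.

Lemma bnd_add f g M N : bnd f M -> bnd g N -> bnd (opadd f g) (M + N).
Proof.
move=> [M0 hM] [N0 hN]; split; first by rewrite addr_ge0.
move=> x; rewrite /opadd; apply: le_trans (nrmD hlin hcj hge _ _) _.
by rewrite mulrDl lerD // ?hM ?hN.
Qed.

Lemma lin_comp f g : islin f -> islin g -> islin (f \o g).
Proof. by move=> hf hg a x y /=; rewrite hg hf. Qed.

Lemma lin_add f g : islin f -> islin g -> islin (opadd f g).
Proof.
move=> hf hg a x y; rewrite /opadd hf hg scalerDr.
by rewrite -!addrA; congr (_ + _); rewrite addrCA.
Qed.

Lemma bounded_lin f : bounded_op f -> islin f.
Proof. by case. Qed.

Lemma bounded_bnd f : bounded_op f -> exists M, bnd f M.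
Proof.
case=> _ [M hM]; exists (Num.max M 0); split; first by rewrite le_max lexx orbT.
move=> x; apply: le_trans (hM x) _; rewrite ler_wpM2r ?(nrm_ge0 hlin hcj hge) //.
by rewrite le_max lexx.
Qed.

Lemma unit_of (y : V) : hnorm y != 0 ->
  hnorm ((hnorm y)^-1%:C%C *: y) = 1.
Proof.
move=> hy; rewrite !hnormE in hy *; rewrite (nrmZ hlin hcj hge) ?invr_ge0 ?(nrm_ge0 hlin hcj hge) //.
by rewrite mulVf.
Qed.

Lemma opnorm_ge0 (f : V -> V) : 0 <= opnorm f.
Proof. by apply: sup_ge0' => v [x _ <-]; exact: (nrm_ge0 hlin hcj hge). Qed.

Lemma numrad_ge0 (f : V -> V) : 0 <= numrad f.
Proof. by apply: sup_ge0' => v [x _ <-]; apply: cabs_ge0. Qed.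

Lemma opnorm_le f M x : islin f -> bnd f M -> hnorm (f x) <= opnorm f * hnorm x.
Proof.
move=> hf [M0 hM].
have ub : forall v, [set hnorm (f x) | x in [set x : V | hnorm x = 1]] v -> v <= M.
  by move=> v [u hu <-]; rewrite -[M]mulr1 -hu hM.
have [h0|hy] := eqVneq (hnorm x) 0.
  by rewrite h0 mulr0 (hnorm_eq0 h0) lin0 // hnorm0.
set u := (hnorm x)^-1%:C%C *: x.
have hu : hnorm u = 1 by apply: unit_of.
have h1 : hnorm (f u) <= opnorm f by apply: (le_sup' ub); exists u.
move: h1; rewrite /u linZ // !hnormE (nrmZ hlin hcj hge) ?invr_ge0 ?(nrm_ge0 hlin hcj hge) //.
have n0 : 0 < nrm ip x by rewrite lt_def hy (nrm_ge0 hlin hcj hge).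
by rewrite mulrC ler_pdivrMr.
Qed.

Lemma numrad_le f M x : islin f -> bnd f M -> cabs (ip (f x) x) <= numrad f * hnorm x ^+ 2.
Proof.
move=> hf [M0 hM].
have ub : forall v, [set cabs (ip (f x) x) | x in [set x : V | hnorm x = 1]] v -> v <= M.
  move=> v [u hu <-]; apply: le_trans (CS hlin hcj hge _ _) _.
  by rewrite /nrm -/(hnorm _) -/(hnorm _) hu mulr1 -[M]mulr1 -hu hM.
have [h0|hy] := eqVneq (hnorm x) 0.
  by rewrite h0 expr0n mulr0 (hnorm_eq0 h0) lin0 // (ip0l hlin hcj hge) /cabs /= expr0n addr0 sqrtr0.
set u := (hnorm x)^-1%:C%C *: x.
have hu : hnorm u = 1 by apply: unit_of.
have h1 : cabs (ip (f u) u) <= numrad f by apply: (le_sup' ub); exists u.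
move: h1; rewrite /u linZ // (ipZl hlin hcj hge) (ipZr hlin hcj hge) conjc_real !cabsM.
rewrite cabs_real ?invr_ge0 ?(nrm_ge0 hlin hcj hge) //.
have n0 : 0 < hnorm x by rewrite lt_def hy (nrm_ge0 hlin hcj hge).
rewrite mulrA -expr2 exprVn mulrC ler_pdivrMr ?exprn_gt0 //.

Qed.

End Ops.

Section Real.
Variable R : realType.
Lemma final_real (z s g Wm Wsq M2 M4 alpha : R) :
  0 <= z -> 2 * z ^+ 2 <= s + g -> 0 <= g -> g <= s -> g <= Wm -> g ^+ 2 <= Wsq ->
  s ^+ 2 <= M4 / 2 -> 2 * s <= M2 -> 0 <= alpha -> alpha <= 1 ->
  z ^+ 4 <= (1 + alpha) / 8 * M4 + (1 - alpha) / 4 * Wsq + 1 / 4 * M2 * Wm.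
Proof.
move=> z0 hz g0 gs gW gW2 s2 sM a0 a1.
have s0 : 0 <= s by lra.
have h1 : z ^+ 4 <= (s + g) ^+ 2 / 4.
  have e : z ^+ 4 = (z ^+ 2) ^+ 2 by rewrite -exprM.
  have zz : 0 <= z ^+ 2 by rewrite sqr_ge0.
  rewrite e; nra.
have h2 : s * g <= M2 / 2 * Wm by nra.
have h3 : g ^+ 2 <= s ^+ 2 by nra.
have h4 : alpha * g ^+ 2 <= alpha * s ^+ 2 by nra.
have h5 : (1 - alpha) * g ^+ 2 <= (1 - alpha) * Wsq by nra.
have h6 : alpha * s ^+ 2 <= alpha * (M4 / 2) by nra.
have e2 : (s + g) ^+ 2 = s ^+ 2 + 2 * (s * g) + (alpha * g ^+ 2 + (1 - alpha) * g ^+ 2) by ring.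
rewrite e2 in h1.
lra.
Qed.

Lemma max_sq (w1 w2 g : R) : 0 <= w1 -> 0 <= w2 -> 0 <= g -> g <= Num.max w1 w2 ->
  g ^+ 2 <= Num.max (w1 ^+ 2) (w2 ^+ 2).
Proof.
move=> h1 h2 h3; rewrite le_max => /orP [] hg; rewrite le_max; apply/orP.
  by left; nra.
by right; nra.
Qed.
End Real.

Section Main.
Variable R : realType.
Variable H : hilbert R.
Local Notation V := (hspace H).
Local Notation ip := (@hip _ H).
Local Notation Re := complex.Re.
Local Notation hlin := (@hip_linear _ H).
Local Notation hcj := (@hip_conj _ H).
Local Notation hge := (@hip_ge0 _ H).
Local Open Scope classical_set_scope.

Lemma ip2_lin (a : R[i]) (x y z : V * V) : ip2 (a *: x + y) z = a * ip2 x z + ip2 y z.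
Proof. by rewrite /ip2 /= !hlin; ring. Qed.

Lemma ip2_cj (x y : V * V) : ip2 x y = (ip2 y x)^*%C.
Proof. by rewrite /ip2 rmorphD /= -!hcj. Qed.

Lemma ip2_ge0 (x : V * V) : 0 <= ip2 x x.
Proof. by rewrite /ip2 addr_ge0 ?hge. Qed.

Definition good (f : V -> V) := islin f /\ exists M, bnd f M.

Lemma good_comp f g : good f -> good g -> good (f \o g).
Proof.
move=> [lf [M hM]] [lg [N hN]]; split; first exact: lin_comp.
by exists (M * N); apply: bnd_comp.
Qed.

Lemma good_add f g : good f -> good g -> good (opadd f g).
Proof.
move=> [lf [M hM]] [lg [N hN]]; split; first exact: lin_add.
by exists (M + N); apply: bnd_add.
Qed.

Lemma opnorm_le' f x : good f -> hnorm (f x) <= opnorm f * hnorm x.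
Proof. by move=> [lf [M hM]]; apply: opnorm_le hM. Qed.

Lemma numrad_le' f x : good f -> cabs (ip (f x) x) <= numrad f * hnorm x ^+ 2.
Proof. by move=> [lf [M hM]]; apply: numrad_le hM. Qed.

Lemma Re_op_le f x : good f -> Re (ip (f x) x) <= opnorm f * hnorm x ^+ 2.
Proof.
move=> gf; apply: le_trans (ReCS hlin hcj hge _ _) _.
rewrite -!hnormE expr2 mulrA ler_wpM2r ?(nrm_ge0 hlin hcj hge) //.
exact: opnorm_le'.
Qed.

Variables (B C Bs Cs : V -> V).
Hypotheses (hB : bounded_op B) (hC : bounded_op C)
  (hBs : is_adjoint B Bs) (hCs : is_adjoint C Cs).

Lemma goodB : good B.
Proof. by split; [apply: bounded_lin | apply: bounded_bnd]. Qed.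
Lemma goodC : good C.
Proof. by split; [apply: bounded_lin | apply: bounded_bnd]. Qed.
Lemma goodBs : good Bs.
Proof.
split; first exact: adj_lin hBs.
by have [M hM] := bounded_bnd hB; exists M; apply: adj_bnd hBs hM.
Qed.
Lemma goodCs : good Cs.
Proof.
split; first exact: adj_lin hCs.
by have [M hM] := bounded_bnd hC; exists M; apply: adj_bnd hCs hM.
Qed.

Lemma pointwise (alpha : R) (x : V * V) : 0 <= alpha -> alpha <= 1 -> hnorm2 x = 1 ->
  cabs (ip2 (opmx (@opzero _ H) B C (@opzero _ H) x) x) ^+ 4 <=
    (1 + alpha) / 8 *
      Num.max (opnorm (opadd ((Bs \o B) \o (Bs \o B)) ((C \o Cs) \o (C \o Cs))))
              (opnorm (opadd ((B \o Bs) \o (B \o Bs)) ((Cs \o C) \o (Cs \o C))))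
  + (1 - alpha) / 4 * Num.max (numrad (B \o C) ^+ 2) (numrad (C \o B) ^+ 2)
  + 1 / 4 * Num.max (opnorm (opadd (Bs \o B) (C \o Cs))) (opnorm (opadd (B \o Bs) (Cs \o C)))
          * Num.max (numrad (B \o C)) (numrad (C \o B)).
Proof.
move=> a0 a1; case: x => x1 x2 hx.
have -> : opmx (@opzero _ H) B C (@opzero _ H) (x1, x2) = (B x2, C x1).
  by rewrite /opmx /opzero /= add0r addr0.
set a := (B x2, C x1); set b := (Cs x2, Bs x1); set x := (x1, x2).
have L2 := ip2_lin; have J2 := ip2_cj; have G2 := ip2_ge0.
have hxx : Re (ip2 x x) = 1.
  by rewrite -(nrm_sq L2 J2 G2) /nrm -/(hnorm2 x) hx expr1n.
have ipxx : ip2 x x = 1 by rewrite (ip_real L2 J2 G2) hxx.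
set n1 := hnorm x1; set n2 := hnorm x2.
have n12 : n1 ^+ 2 + n2 ^+ 2 = 1.
  by rewrite /n1 /n2 !hnormE !(nrm_sq hlin hcj hge) -raddfD.
have n1p : 0 <= n1 by apply: (nrm_ge0 hlin hcj hge).
have n2p : 0 <= n2 by apply: (nrm_ge0 hlin hcj hge).
set c := ip2 a x.
have hcb : ip2 x b = c by rewrite /ip2 /c /= -hCs -hBs addrC.
have buz := buzano L2 J2 G2 a b ipxx.
rewrite -/c hcb cabsM -expr2 in buz.
set g := cabs (ip2 a b) in buz.
set ha := nrm (@ip2 _ H) a in buz; set hb := nrm (@ip2 _ H) b in buz.
have hab : ip2 a b = ip ((B \o C) x1) x1 + ip ((C \o B) x2) x2.
  by rewrite /ip2 /= -hCs -hBs addrC.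
have g0 : 0 <= g by apply: cabs_ge0.
set w1 := numrad (B \o C); set w2 := numrad (C \o B).
have w10 : 0 <= w1 by apply: numrad_ge0.
have w20 : 0 <= w2 by apply: numrad_ge0.
have gBC : good (B \o C) by apply: good_comp; [apply: goodB | apply: goodC].
have gCB : good (C \o B) by apply: good_comp; [apply: goodC | apply: goodB].
have gW : g <= Num.max w1 w2.
  rewrite /g hab; apply: le_trans (cabsD _ _) _.
  have h1 := numrad_le' x1 gBC; have h2 := numrad_le' x2 gCB.
  have m1 : w1 <= Num.max w1 w2 by rewrite le_max lexx.
  have m2 : w2 <= Num.max w1 w2 by rewrite le_max lexx orbT.
  rewrite -/n1 -/n2 -/w1 -/w2 in h1 h2.
  have q1 : 0 <= n1 ^+ 2 by rewrite sqr_ge0.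
  have q2 : 0 <= n2 ^+ 2 by rewrite sqr_ge0.
  nra.
have gW2 := max_sq w10 w20 g0 gW.
have gs : g <= ha * hb by apply: (CS L2 J2 G2).
have ha0 : 0 <= ha by apply: (nrm_ge0 L2 J2 G2).
have hb0 : 0 <= hb by apply: (nrm_ge0 L2 J2 G2).
have ha2 : ha ^+ 2 = Re (ip (B x2) (B x2)) + Re (ip (C x1) (C x1)).
  by rewrite /ha (nrm_sq L2 J2 G2) /ip2 raddfD.
have hb2 : hb ^+ 2 = Re (ip (Cs x2) (Cs x2)) + Re (ip (Bs x1) (Bs x1)).
  by rewrite /hb (nrm_sq L2 J2 G2) /ip2 raddfD.
have iC1 : Re (ip (C x1) (C x1)) = Re (ip ((Cs \o C) x1) x1) by rewrite hCs /= hcj ReJ.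
have iBs1 : Re (ip (Bs x1) (Bs x1)) = Re (ip ((B \o Bs) x1) x1) by rewrite /= hBs.
have iB2 : Re (ip (B x2) (B x2)) = Re (ip ((Bs \o B) x2) x2) by rewrite hBs /= hcj ReJ.
have iCs2 : Re (ip (Cs x2) (Cs x2)) = Re (ip ((C \o Cs) x2) x2) by rewrite /= hCs.
set P2 := opadd (B \o Bs) (Cs \o C); set Q2 := opadd (Bs \o B) (C \o Cs).
have gP2 : good P2.
  apply: good_add; apply: good_comp; by [apply: goodB|apply: goodBs|apply: goodCs|apply: goodC].
have gQ2 : good Q2.
  apply: good_add; apply: good_comp; by [apply: goodB|apply: goodBs|apply: goodCs|apply: goodC].
have eP2 : Re (ip (P2 x1) x1) = Re (ip (C x1) (C x1)) + Re (ip (Bs x1) (Bs x1)).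
  by rewrite iC1 iBs1 /P2 /opadd (ipDl hlin hcj hge) raddfD addrC.
have eQ2 : Re (ip (Q2 x2) x2) = Re (ip (B x2) (B x2)) + Re (ip (Cs x2) (Cs x2)).
  by rewrite iB2 iCs2 /Q2 /opadd (ipDl hlin hcj hge) raddfD.
have hP2 := Re_op_le x1 gP2; have hQ2 := Re_op_le x2 gQ2.
rewrite -/n1 eP2 in hP2; rewrite -/n2 eQ2 in hQ2.
set M2 := Num.max (opnorm Q2) (opnorm P2).
have mP2 : opnorm P2 <= M2 by rewrite le_max lexx orbT.
have mQ2 : opnorm Q2 <= M2 by rewrite le_max lexx.
have sM : 2 * (ha * hb) <= M2.
  have q1 : 0 <= n1 ^+ 2 by rewrite sqr_ge0.
  have q2 : 0 <= n2 ^+ 2 by rewrite sqr_ge0.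
  have e1 : ha ^+ 2 + hb ^+ 2 <= M2.
    rewrite ha2 hb2; nra.
  have := sqr_ge0 (ha - hb); nra.
set P4 := opadd ((B \o Bs) \o (B \o Bs)) ((Cs \o C) \o (Cs \o C)).
set Q4 := opadd ((Bs \o B) \o (Bs \o B)) ((C \o Cs) \o (C \o Cs)).
have gP4 : good P4.
  apply: good_add; apply: good_comp; apply: good_comp;
    by [apply: goodB|apply: goodBs|apply: goodCs|apply: goodC].
have gQ4 : good Q4.
  apply: good_add; apply: good_comp; apply: good_comp;
    by [apply: goodB|apply: goodBs|apply: goodCs|apply: goodC].
set p1 := hnorm (Cs (C x1)); set p1' := hnorm (B (Bs x1)).
set q2 := hnorm (Bs (B x2)); set q2' := hnorm (C (Cs x2)).
have eP4 : Re (ip (P4 x1) x1) = p1 ^+ 2 + p1' ^+ 2.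
  rewrite /p1 /p1' !hnormE !(nrm_sq hlin hcj hge).
  rewrite (adjl hCs (C x1) (Cs (C x1))) (hCs x1).
  rewrite (hBs (Bs x1) (B (Bs x1))) (adjl hBs x1).
  rewrite (hcj x1 (Cs _)) (hcj x1 (B _)) !ReJ.
  by rewrite /P4 /opadd (ipDl hlin hcj hge) raddfD addrC.
have eQ4 : Re (ip (Q4 x2) x2) = q2 ^+ 2 + q2' ^+ 2.
  rewrite /q2 /q2' !hnormE !(nrm_sq hlin hcj hge).
  rewrite (adjl hBs (B x2) (Bs (B x2))) (hBs x2).
  rewrite (hCs (Cs x2) (C (Cs x2))) (adjl hCs x2).
  rewrite (hcj x2 (Bs _)) (hcj x2 (C _)) !ReJ.
  by rewrite /Q4 /opadd (ipDl hlin hcj hge) raddfD.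
have hP4 := Re_op_le x1 gP4; have hQ4 := Re_op_le x2 gQ4.
rewrite -/n1 eP4 in hP4; rewrite -/n2 eQ4 in hQ4.
set M4 := Num.max (opnorm Q4) (opnorm P4).
have mP4 : opnorm P4 <= M4 by rewrite le_max lexx orbT.
have mQ4 : opnorm Q4 <= M4 by rewrite le_max lexx.
have r1 : Re (ip (C x1) (C x1)) <= p1 * n1.
  by rewrite iC1; apply: (ReCS hlin hcj hge).
have r2 : Re (ip (B x2) (B x2)) <= q2 * n2.
  by rewrite iB2; apply: (ReCS hlin hcj hge).
have r3 : Re (ip (Bs x1) (Bs x1)) <= p1' * n1.
  by rewrite iBs1; apply: (ReCS hlin hcj hge).
have r4 : Re (ip (Cs x2) (Cs x2)) <= q2' * n2.
  by rewrite iCs2; apply: (ReCS hlin hcj hge).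
have z1 := Re_ge0 hlin hcj hge (C x1); have z2 := Re_ge0 hlin hcj hge (B x2).
have z3 := Re_ge0 hlin hcj hge (Bs x1); have z4 := Re_ge0 hlin hcj hge (Cs x2).
have ha4 : (ha ^+ 2) ^+ 2 <= p1 ^+ 2 + q2 ^+ 2.
  rewrite ha2.
  have t1 : (Re (ip (B x2) (B x2)) + Re (ip (C x1) (C x1))) ^+ 2 <= (p1 * n1 + q2 * n2) ^+ 2.
    by rewrite lerXn2r ?nnegrE ?addr_ge0 //; lra.
  apply: le_trans t1 _.
  have e : p1 ^+ 2 + q2 ^+ 2 = (p1 ^+ 2 + q2 ^+ 2) * (n1 ^+ 2 + n2 ^+ 2) by rewrite n12 mulr1.
  rewrite e; have := sqr_ge0 (p1 * n2 - q2 * n1); nra.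
have hb4 : (hb ^+ 2) ^+ 2 <= p1' ^+ 2 + q2' ^+ 2.
  rewrite hb2.
  have t1 : (Re (ip (Cs x2) (Cs x2)) + Re (ip (Bs x1) (Bs x1))) ^+ 2 <= (p1' * n1 + q2' * n2) ^+ 2.
    by rewrite lerXn2r ?nnegrE ?addr_ge0 //; lra.
  apply: le_trans t1 _.
  have e : p1' ^+ 2 + q2' ^+ 2 = (p1' ^+ 2 + q2' ^+ 2) * (n1 ^+ 2 + n2 ^+ 2) by rewrite n12 mulr1.
  rewrite e; have := sqr_ge0 (p1' * n2 - q2' * n1); nra.
have s2 : (ha * hb) ^+ 2 <= M4 / 2.
  have q1 : 0 <= n1 ^+ 2 by rewrite sqr_ge0.
  have q2p : 0 <= n2 ^+ 2 by rewrite sqr_ge0.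
  have e1 : p1 ^+ 2 + q2 ^+ 2 + (p1' ^+ 2 + q2' ^+ 2) <= M4 by nra.
  have e2 : (ha * hb) ^+ 2 <= ((ha ^+ 2) ^+ 2 + (hb ^+ 2) ^+ 2) / 2.
    rewrite exprMn; have := sqr_ge0 (ha ^+ 2 - hb ^+ 2); nra.
  lra.
by apply: (@final_real R (cabs c) (ha * hb) g) => //; apply: cabs_ge0.
Qed.

End Main.

Unset Implicit Arguments.
Set Strict Implicit.

Theorem mainTheorem10 (R : realType) (H : hilbert R)
  (B C Bs Cs : hspace H -> hspace H)
  (hB : bounded_op B) (hC : bounded_op C)
  (hBs : is_adjoint B Bs) (hCs : is_adjoint C Cs)
  (alpha : R) (ha0 : 0 <= alpha) (ha1 : alpha <= 1) :
  let absB2 := Bs \o B in   (* |B|^2  = B^*B *)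
  let absBs2 := B \o Bs in  (* |B^*|^2 = BB^* *)
  let absC2 := Cs \o C in   (* |C|^2  = C^*C *)
  let absCs2 := C \o Cs in  (* |C^*|^2 = CC^* *)
  numrad2 (opmx (@opzero _ H) B C (@opzero _ H)) ^+ 4 <=
    (1 + alpha) / 8 *
      Num.max (opnorm (opadd (absB2 \o absB2) (absCs2 \o absCs2)))
              (opnorm (opadd (absBs2 \o absBs2) (absC2 \o absC2)))
  + (1 - alpha) / 4 * Num.max (numrad (B \o C) ^+ 2) (numrad (C \o B) ^+ 2)
  + 1 / 4 * Num.max (opnorm (opadd absB2 absCs2)) (opnorm (opadd absBs2 absC2))
          * Num.max (numrad (B \o C)) (numrad (C \o B)).
Proof.
cbv zeta.
apply: sup4_le.
  have m0 : forall a b : R, 0 <= a -> 0 <= Num.max a b by move=> a b h; rewrite le_max h.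
  apply: addr_ge0; first apply: addr_ge0.
  - apply: mulr_ge0; first lra.
    by apply: m0; apply: opnorm_ge0.
  - apply: mulr_ge0; first lra.
    by apply: m0; apply: sqr_ge0.
  - apply: mulr_ge0; first apply: mulr_ge0; first lra.
    + by apply: m0; apply: opnorm_ge0.
    + by apply: m0; apply: numrad_ge0.
move=> v [x hx <-]; split; first exact: cabs_ge0.
exact: pointwise.
Qed.
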